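(* Let $(P,\leqslant)$ be a conditionally-complete interpolating poset and let $P^* := \{x \in P : \exists\, y \in P,\ y \ll x\}$. Let $D$ be a directed subset of $P$ bounded above, and assume there exists $y \in P^*$ with $y \leqslant \bigvee D$. Then $D \cap P^* \neq \emptyset$; consequently $D \cap P^*$ is directed and $\bigvee D = \bigvee (D \cap P^* )$.
   Context: A poset is conditionally-complete if every nonempty subset bounded above has a supremum. A nonempty subset $D$ is directed if any two elements of $D$ have an upper bound in $D$. For $x,y \in P$, $x \ll y$ ($x$ way-below $y$) means: for every directed subset $D$ of $P$ bounded above with supremum $d_0$, $y \leqslant d_0$ implies $x \leqslant d$ for some $d \in D$. $P$ is interpolating if whenever $x \ll y$ there is $z \in P$ with $x \ll z \ll y$. *)

(* Defs.v *)
From HB Require Import structures.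
From mathcomp Require Import all_boot all_order.
Set Implicit Arguments. Unset Strict Implicit. Unset Printing Implicit Defensive.
Import Order.TTheory.
Local Open Scope order_scope.

Section PosetDefs.
Context {disp : Order.disp_t} {T : porderType disp}.

Definition upper_bound (A : T -> Prop) (u : T) : Prop := forall a, A a -> a <= u.
Definition bounded_above (A : T -> Prop) : Prop := exists u, upper_bound A u.
Definition is_sup (A : T -> Prop) (s : T) : Prop :=
  upper_bound A s /\ forall u, upper_bound A u -> s <= u.

Definition cond_complete : Prop :=
  forall A : T -> Prop, (exists a, A a) -> bounded_above A -> exists s, is_sup A s.

Definition directed (D : T -> Prop) : Prop :=
  (exists d, D d) /\
  forall x y, D x -> D y -> exists z, D z /\ x <= z /\ y <= z.

Definition way_below (x y : T) : Prop :=
  forall (D : T -> Prop) (d0 : T),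
    directed D -> bounded_above D -> is_sup D d0 -> y <= d0 ->
    exists d, D d /\ x <= d.

Definition interpolating : Prop :=
  forall x y, way_below x y -> exists z, way_below x z /\ way_below z y.

Definition Pstar (x : T) : Prop := exists y, way_below y x.

End PosetDefs.

(* Main.v *)
Require Import Defs.
From mathcomp Require Import all_boot all_order.
Local Open Scope order_scope.

Lemma wb_mono (disp : Order.disp_t) (T : porderType disp) (x y z : T) :
  way_below x y -> y <= z -> way_below x z.
Proof.
move=> H yz D d0 dD bD sD zd; apply: (H D d0) => //.
exact: Order.le_trans yz zd.
Qed.

Lemma pstar_mono (disp : Order.disp_t) (T : porderType disp) (x z : T) :
  Pstar x -> x <= z -> Pstar z.
Proof. by move=> [u Hu] xz; exists u; exact: wb_mono Hu xz. Qed.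

Theorem lemma2p3 (disp : Order.disp_t) (T : porderType disp) :
  @cond_complete disp T -> @interpolating disp T ->
  forall (D : T -> Prop) (supD : T),
    directed D -> bounded_above D -> is_sup D supD ->
    (exists y : T, Pstar y /\ y <= supD) ->
    (exists x, D x /\ Pstar x) /\
    directed (fun x => D x /\ Pstar x) /\
    is_sup (fun x => D x /\ Pstar x) supD.
Proof.
move=> _ Hint D supD dD bD sD [y [[w Hw] ysup]].
have [z [wz zy]] := Hint _ _ Hw.
have [d [Dd zd]] := zy D supD dD bD sD ysup.
have ne : exists x, D x /\ Pstar x.
  by exists d; split => //; exists w; exact: wb_mono wz zd.
split => //.
have dir : directed (fun x => D x /\ Pstar x).
  split => // a b [Da Pa] [Db Pb].
  have [c [Dc [ac bc]]] := dD.2 a b Da Db.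
  by exists c; split => //; split => //; exact: pstar_mono Pa ac.
split => //; split.
  by move=> a [Da _]; exact: sD.1.
move=> u Hu; apply: sD.2 => a Da.
have [e [De Pe]] := ne.
have [c [Dc [ac ec]]] := dD.2 a e Da De.
apply: Order.le_trans ac _; apply: Hu; split => //; exact: pstar_mono Pe ec.
Qed.
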